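(* Let $A$ be a Keigher ring, $X=\operatorname{Spec}^\Delta A$, and let $D$ be a differential subring of $\mathcal O(X)$ containing $\iota(A)$. Let $\iota\colon A\to D$ denote the corresponding homomorphism. Then $\iota^*\colon\operatorname{Spec}^\Delta D\to\operatorname{Spec}^\Delta A$, $\mathfrak q\mapsto\iota^{-1}(\mathfrak q)$, is a homeomorphism.
   Context: All rings are commutative with unit. A differential ring is a ring with finitely many pairwise commuting derivations. A Keigher ring is a differential ring in which the radical $\{x: x^n\in\mathfrak a\text{ for some }n\}$ of every differential ideal $\mathfrak a$ is again a differential ideal. $\operatorname{Spec}^\Delta R$ is the set of prime ideals of a differential ring $R$ closed under all derivations, with the Kolchin topology (closed sets $V(E)=\{\mathfrak p: E\subseteq\mathfrak p\}$). For $\mathfrak p\in X$, $A_{\mathfrak p}$ is the localization at $A\setminus\mathfrak p$. Structure sheaf: for open $U\subseteq X$, $\mathcal O(U)$ is the set of functions $f$ on $U$ with $f(\mathfrak p)\in A_{\mathfrak p}$ that are regular at every point of $U$, where $f$ is regular at $\mathfrak p$ if there exist an open neighborhood $W\subseteq U$ of $\mathfrak p$ and $a,b\in A$ with $b\notin\mathfrak q$ and $f(\mathfrak q)=a/b$ in $A_{\mathfrak q}$ for all $\mathfrak q\in W$; it is a differential ring with pointwise operations and derivations. The differential homomorphism $\iota\colon A\to\mathcal O(X)$ sends $a$ to the function $\mathfrak p\mapsto a/1\in A_{\mathfrak p}$. *)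

(* Defs.v *)
From HB Require Import structures.
From mathcomp Require Import all_boot all_order all_algebra.
Set Implicit Arguments. Unset Strict Implicit. Unset Printing Implicit Defensive.
Import GRing.Theory.
Local Open Scope ring_scope.

Definition seteq {T : Type} (P Q : T -> Prop) := forall x, P x <-> Q x.

Definition kclosed {T : Type} (spec : (T -> Prop) -> Prop)
    (C : (T -> Prop) -> Prop) :=
  exists E : T -> Prop, forall P, spec P -> (C P <-> (forall x, E x -> P x)).

(* f : spec_S -> spec_T is a homeomorphism (points are subsets, compared
   extensionally): well defined, bijective, continuous, and closed
   (= continuity of the inverse for a bijection). *)
Definition homeo {S T : Type} (specS : (S -> Prop) -> Prop)
    (closedS : ((S -> Prop) -> Prop) -> Prop)
    (specT : (T -> Prop) -> Prop) (closedT : ((T -> Prop) -> Prop) -> Prop)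
    (f : (S -> Prop) -> (T -> Prop)) :=
  (forall x, specS x -> specT (f x)) /\
  (forall x y, specS x -> specS y -> seteq (f x) (f y) -> seteq x y) /\
  (forall y, specT y -> exists x, specS x /\ seteq (f x) y) /\
  (forall C, closedT C -> closedS (fun x => C (f x))) /\
  (forall C, closedS C ->
     closedT (fun y => exists x, specS x /\ C x /\ seteq (f x) y)).

Section Diff.
Variables (A : comPzRingType) (m : nat) (d : 'I_m -> A -> A).

Definition is_derivation (f : A -> A) :=
  (forall x y, f (x + y) = f x + f y) /\
  (forall x y, f (x * y) = f x * y + x * f y).

Definition diff_structure :=
  (forall i, is_derivation (d i)) /\
  (forall i j x, d i (d j x) = d j (d i x)).

Definition ideal (I : A -> Prop) :=
  I 0 /\ (forall x y, I x -> I y -> I (x + y)) /\ (forall x y, I y -> I (x * y)).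
Definition diff_ideal (I : A -> Prop) := ideal I /\ forall i x, I x -> I (d i x).
Definition radical (I : A -> Prop) : A -> Prop := fun x => exists n, I (x ^+ n).
Definition keigher := forall I, diff_ideal I -> diff_ideal (radical I).
Definition prime_ideal (P : A -> Prop) :=
  ideal P /\ ~ P 1 /\ forall x y, P (x * y) -> P x \/ P y.
Definition dspec (P : A -> Prop) := prime_ideal P /\ forall i x, P x -> P (d i x).

Definition Xpt := {P : A -> Prop | dspec P}.

Definition openX (U : Xpt -> Prop) :=
  exists E : A -> Prop, forall p : Xpt, U p <-> ~ (forall x, E x -> proj1_sig p x).

(* Element a/b of A_P, represented as its equivalence class of pairs
   (z.1, z.2) with z.2 ∉ P and s (a z.2 - z.1 b) = 0 for some s ∉ P. *)
Definition frac (P : A -> Prop) (x : A * A) : A * A -> Prop :=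
  fun z => ~ P z.2 /\ exists s, ~ P s /\ s * (x.1 * z.2 - z.1 * x.2) = 0.

(* Functions f on X with f(p) ∈ A_p (an element of A_p is a class of pairs). *)
Definition sect := Xpt -> (A * A -> Prop).

Definition regular_at (f : sect) (p : Xpt) :=
  exists W : Xpt -> Prop, openX W /\ W p /\
    exists a b : A, forall q : Xpt, W q ->
      ~ proj1_sig q b /\ seteq (f q) (frac (proj1_sig q) (a, b)).

Definition Osec (f : sect) := forall p, regular_at f p.

Definition ladd (P : A -> Prop) (F G : A * A -> Prop) : A * A -> Prop :=
  fun z => exists x y, F x /\ G y /\ frac P (x.1 * y.2 + y.1 * x.2, x.2 * y.2) z.
Definition lmul (P : A -> Prop) (F G : A * A -> Prop) : A * A -> Prop :=
  fun z => exists x y, F x /\ G y /\ frac P (x.1 * y.1, x.2 * y.2) z.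
Definition lopp (P : A -> Prop) (F : A * A -> Prop) : A * A -> Prop :=
  fun z => exists x, F x /\ frac P (- x.1, x.2) z.
Definition lder (i : 'I_m) (P : A -> Prop) (F : A * A -> Prop) : A * A -> Prop :=
  fun z => exists x, F x /\
    frac P (d i x.1 * x.2 - x.1 * d i x.2, x.2 * x.2) z.

Definition s0 : sect := fun q => frac (proj1_sig q) (0, 1).
Definition s1 : sect := fun q => frac (proj1_sig q) (1, 1).
Definition sadd (f g : sect) : sect := fun q => ladd (proj1_sig q) (f q) (g q).
Definition smul (f g : sect) : sect := fun q => lmul (proj1_sig q) (f q) (g q).
Definition sopp (f : sect) : sect := fun q => lopp (proj1_sig q) (f q).
Definition sder (i : 'I_m) (f : sect) : sect :=
  fun q => lder i (proj1_sig q) (f q).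

Definition iotaO (a : A) : sect := fun q => frac (proj1_sig q) (a, 1).

Definition dsubring (D : sect -> Prop) :=
  (forall f, D f -> Osec f) /\ D s0 /\ D s1 /\
  (forall f g, D f -> D g -> D (sadd f g)) /\
  (forall f, D f -> D (sopp f)) /\
  (forall f g, D f -> D g -> D (smul f g)) /\
  (forall i f, D f -> D (sder i f)).

Definition dspecD (D : sect -> Prop) (Q : sect -> Prop) :=
  (forall f, Q f -> D f) /\ Q s0 /\
  (forall f g, Q f -> Q g -> Q (sadd f g)) /\
  (forall f g, D f -> Q g -> Q (smul f g)) /\
  ~ Q s1 /\
  (forall f g, D f -> D g -> Q (smul f g) -> Q f \/ Q g) /\
  (forall i f, Q f -> Q (sder i f)).

Definition iota_star (Q : sect -> Prop) : A -> Prop := fun a => Q (iotaO a).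

End Diff.

(* Main.v *)
Require Import Defs.
From HB Require Import structures.
From mathcomp Require Import all_boot all_order all_algebra.
From Stdlib Require Import Ring Classical FunctionalExtensionality PropExtensionality ProofIrrelevance ClassicalEpsilon.
Set Implicit Arguments. Unset Strict Implicit. Unset Printing Implicit Defensive.
Import GRing.Theory.
Local Open Scope ring_scope.

Local Notation frac := Defs.frac.
Lemma pred_ext {T : Type} (P Q : T -> Prop) : seteq P Q -> P = Q.
Proof.
move=> H; apply: functional_extensionality => x; apply: propositional_extensionality; exact: H.
Qed.


Definition incl {T : Type} (J K : T -> Prop) := forall x, J x -> K x.
Definition chain {T : Type} (C : (T -> Prop) -> Prop) :=
  forall J K, C J -> C K -> incl J K \/ incl K J.

Lemma pred_ext' {T : Type} (P Q : T -> Prop) : incl P Q -> incl Q P -> P = Q.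
Proof.
intros H1 H2; apply functional_extensionality; intro x; apply propositional_extensionality; split; auto.
Qed.

Section Tower.
Variables (T : Type) (b : T -> Prop) (succ : (T -> Prop) -> (T -> Prop)).
Definition supc (C : (T -> Prop) -> Prop) : T -> Prop := fun x => b x \/ exists J, C J /\ J x.
Inductive Tw : (T -> Prop) -> Prop :=
 | TwS J : Tw J -> Tw (succ J)
 | TwU C : (forall J, C J -> Tw J) -> chain C -> Tw (supc C).
Hypothesis succ_ext : forall J, Tw J -> incl J (succ J).

Lemma Tw_b J : Tw J -> incl b J.
Proof.
induction 1 as [J HJ IH|C HC IH hch].
- intros x hx; apply succ_ext; auto.
- intros x hx; left; exact hx.
Qed.

Definition extreme c := Tw c /\ forall x, Tw x -> incl x c -> ~ incl c x -> incl (succ x) c.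

Lemma extA c : extreme c -> forall x, Tw x -> incl x c \/ incl (succ c) x.
Proof.
intros [Tc Ec] x Tx; induction Tx as [x Tx IH|C HC IH hch].
- destruct IH as [H|H].
  + destruct (classic (incl c x)) as [H'|H'].
    * right; rewrite (pred_ext' H H'); intros y hy; exact hy.
    * left; apply Ec; auto.
  + right; intros y hy; apply succ_ext; auto.
- destruct (classic (exists J, C J /\ incl (succ c) J)) as [[J [CJ HJ]]|H].
  + right; intros y hy; right; exists J; auto.
  + left; intros y [hy|[J [CJ hJ]]].
    * exact (Tw_b Tc hy).
    * destruct (IH J CJ) as [H1|H1]; [exact (H1 y hJ)|].
      exfalso; apply H; exists J; auto.
Qed.

Lemma extB c : Tw c -> extreme c.
Proof.
induction 1 as [c Tc IH|C HC IH hch].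
- split; [constructor; auto|].
  intros x Tx Hxs Hn.
  destruct (extA IH Tx) as [H|H]; [|contradiction].
  destruct (classic (incl c x)) as [H'|H'].
  + rewrite (pred_ext' H H'); intros y hy; exact hy.
  + intros y hy; apply succ_ext; auto. apply (proj2 IH x Tx H H'); exact hy.
- split; [constructor; auto|].
  intros x Tx Hxs Hn.
  destruct (classic (exists J, C J /\ ~ incl J x)) as [[J [CJ HJ]]|H].
  + destruct (extA (IH J CJ) Tx) as [H1|H1].
    * intros y hy; right; exists J; split; auto. apply (proj2 (IH J CJ) x Tx H1 HJ); exact hy.
    * exfalso; apply HJ; intros y hy; apply H1; apply succ_ext; auto.
  + exfalso; apply Hn; intros y [hy|[J [CJ hJ]]].
    * exact (Tw_b Tx hy).
    * destruct (classic (incl J x)) as [H2|H2]; [exact (H2 y hJ)|].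
      exfalso; apply H; exists J; auto.
Qed.

Lemma Tw_chain : chain Tw.
Proof.
intros c x Tc Tx; destruct (extA (extB Tc) Tx) as [H|H]; [right; exact H|].
left; intros y hy; apply H; apply succ_ext; auto.
Qed.
End Tower.

Lemma zorn (T : Type) (F : (T -> Prop) -> Prop) (b : T -> Prop) :
  F b -> (forall J, F J -> incl b J) ->
  (forall C, (forall J, C J -> F J) -> chain C -> F (supc b C)) ->
  exists M, F M /\ forall J, F J -> incl M J -> incl J M.
Proof.
intros Fb HbJ HU.
apply NNPP; intro Hn.
assert (Hs : forall J, exists K, F J -> F K /\ incl J K /\ ~ incl K J).
{ intro J. destruct (classic (F J)) as [FJ|FJ].
  - apply NNPP; intro H2; apply Hn; exists J; split; auto.
    intros K FK JK; apply NNPP; intro KJ; apply H2; exists K; auto.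
  - exists J; intro; contradiction. }
set (succ := fun J => proj1_sig (constructive_indefinite_description _ (Hs J))).
assert (Hsucc : forall J, F J -> F (succ J) /\ incl J (succ J) /\ ~ incl (succ J) J).
{ intro J; unfold succ; destruct (constructive_indefinite_description _ (Hs J)); simpl; auto. }
assert (TwF : forall J, Tw b succ J -> F J).
{ induction 1 as [J HJ IH|C HC IH hch]; [apply Hsucc; auto | apply HU; auto]. }
assert (sext : forall J, Tw b succ J -> incl J (succ J)).
{ intros J HJ; apply Hsucc; auto. }
assert (TS : Tw b succ (supc b (Tw b succ))).
{ apply TwU; auto. apply Tw_chain; auto. }
destruct (Hsucc _ (TwF _ TS)) as [_ [_ H]].
apply H; intros y hy; right; exists (succ (supc b (Tw b succ))); split; auto.
apply TwS; auto.
Qed.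

Section Main.
Variable A : comPzRingType.
Variable m : nat.
Variable d : 'I_m -> A -> A.
Hypothesis Hd : diff_structure d.
Hypothesis HK : keigher d.

Definition radd (x y : A) : A := x + y.
Definition rmul (x y : A) : A := x * y.
Definition ropp (x : A) : A := - x.
Definition rsub (x y : A) : A := x - y.
Definition rzero : A := 0.
Definition rone : A := 1.
Lemma Aring0 : @ring_theory A rzero rone radd rmul rsub ropp eq.
Proof.
rewrite /radd /rmul /ropp /rsub /rzero /rone.
split; move=> *; rewrite ?add0r ?addrA ?mul1r ?mulrA ?subrr //.
exact: addrC. exact: mulrC. exact: mulrDl.
Qed.
Add Ring Aring0 : Aring0.
Lemma ceq (x y : A) : @eq A x y -> x = y. Proof. by []. Qed.
Lemma raddE (x y : A) : x + y = radd x y. Proof. by []. Qed.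
Lemma rmulE (x y : A) : x * y = rmul x y. Proof. by []. Qed.
Lemma roppE (x : A) : - x = ropp x. Proof. by []. Qed.
Lemma rzeroE : 0 = rzero :> A. Proof. by []. Qed.
Lemma roneE : 1 = rone :> A. Proof. by []. Qed.
Ltac aring := apply: ceq; rewrite ?raddE ?rmulE ?roppE ?rzeroE ?roneE; ring.

Lemma lc2 (E u v p q : A) : E = p * u + q * v -> u = 0 -> v = 0 -> E = 0.
Proof. by move=> -> -> ->; rewrite !mulr0 addr0. Qed.
Lemma lc1 (E u p : A) : E = p * u -> u = 0 -> E = 0.
Proof. by move=> -> ->; rewrite mulr0. Qed.

Lemma dD i x y : d i (x + y) = d i x + d i y. Proof. exact: ((Hd.1 i).1). Qed.
Lemma dM i x y : d i (x * y) = d i x * y + x * d i y. Proof. exact: ((Hd.1 i).2). Qed.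
Lemma d0 i : d i 0 = 0.
Proof. have := dD i 0 0; rewrite addr0 => /(congr1 (fun z => z - d i 0)); rewrite subrr addrK. by move=> <-. Qed.
Lemma dN i x : d i (- x) = - d i x.
Proof. have := dD i x (- x); rewrite subrr d0 => /eqP; rewrite eq_sym addr_eq0 => /eqP.
by move=> ->; rewrite opprK. Qed.
Lemma d1 i : d i 1 = 0.
Proof. have := dM i 1 1; rewrite !mulr1 !mul1r => /(congr1 (fun z => z - d i 1)); rewrite subrr addrK. by move=> <-. Qed.

Section Prime.
Variable P : A -> Prop.
Hypothesis hP : prime_ideal P.
Lemma pr0 : P 0. Proof. exact: hP.1.1. Qed.
Lemma prD x y : P x -> P y -> P (x + y). Proof. exact: hP.1.2.1. Qed.
Lemma prM x y : P y -> P (x * y). Proof. exact: hP.1.2.2. Qed.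
Lemma prMr x y : P x -> P (x * y). Proof. by move=> h; rewrite mulrC; apply: prM. Qed.
Lemma prN x : P x -> P (- x). Proof. by move=> h; rewrite -mulN1r; apply: prM. Qed.
Lemma prB x y : P x -> P y -> P (x - y). Proof. by move=> h1 h2; apply: prD => //; apply: prN. Qed.
Lemma npr1 : ~ P 1. Proof. exact: hP.2.1. Qed.
Lemma prP x y : P (x * y) -> P x \/ P y. Proof. exact: hP.2.2. Qed.
Lemma nprM x y : ~ P x -> ~ P y -> ~ P (x * y).
Proof. by move=> h1 h2 /prP [] //. Qed.
Lemma prX x n : P (x ^+ n) -> P x.
Proof.
elim: n => [|n IH]; first by rewrite expr0 => /npr1.
by rewrite exprS => /prP [] // /IH.
Qed.
Lemma nprX x n : ~ P x -> ~ P (x ^+ n).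
Proof. by move=> h /prX. Qed.
Lemma pr_eq x y : x = y -> P x -> P y. Proof. by move=> ->. Qed.

Lemma frac_refl x : ~ P x.2 -> frac P x x.
Proof. move=> h; split => //; exists 1; split; first exact: npr1. by rewrite subrr mulr0. Qed.
Lemma frac_sym x y : ~ P x.2 -> frac P x y -> frac P y x.
Proof.
move=> hx [hy [s [hs e]]]; split => //; exists s; split => //.
apply: (@lc1 _ _ (-1) _ e); aring.
Qed.
Lemma frac_trans x y z : frac P x y -> frac P y z -> frac P x z.
Proof.
move=> [hy [s [hs e1]]] [hz [t [ht e2]]]; split => //; exists (s * t * y.2); split.
  by apply: nprM => //; apply: nprM.
apply: (@lc2 _ _ _ (t * z.2) (s * x.2) _ e1 e2); aring.
Qed.
Lemma frac_eq x y : ~ P x.2 -> frac P x y -> frac P x = frac P y.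
Proof.
move=> hx hxy; apply: pred_ext => z; split => h.
  exact: frac_trans (frac_sym hx hxy) h.
exact: frac_trans hxy h.
Qed.
Lemma frac_eqr x y : ~ P x.2 -> ~ P y.2 -> x.1 * y.2 = y.1 * x.2 -> frac P x = frac P y.
Proof.
move=> hx hy e; apply: frac_eq => //; split => //; exists 1; split; first exact: npr1.
by rewrite e subrr mulr0.
Qed.
Lemma frac_in x y : frac P x y -> ~ P y.2. Proof. by case. Qed.

Lemma frac_add x y : ~ P x.2 -> ~ P y.2 ->
  ladd P (frac P x) (frac P y) = frac P (x.1 * y.2 + y.1 * x.2, x.2 * y.2).
Proof.
move=> hx hy; apply: pred_ext => z; split.
  move=> [x' [y' [[hx' [s [hs e1]]] [[hy' [t [ht e2]]] hz]]]].
  apply: frac_trans hz; split; first by apply: nprM.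
  exists (s * t); split; first by apply: nprM.
  apply: (@lc2 _ _ _ (t * y.2 * y'.2) (s * x.2 * x'.2) _ e1 e2); rewrite /=; aring.
move=> hz; exists x, y; split; first exact: frac_refl.
by split; first exact: frac_refl.
Qed.
Lemma frac_mul x y : ~ P x.2 -> ~ P y.2 ->
  lmul P (frac P x) (frac P y) = frac P (x.1 * y.1, x.2 * y.2).
Proof.
move=> hx hy; apply: pred_ext => z; split.
  move=> [x' [y' [[hx' [s [hs e1]]] [[hy' [t [ht e2]]] hz]]]].
  apply: frac_trans hz; split; first by apply: nprM.
  exists (s * t); split; first by apply: nprM.
  apply: (@lc2 _ _ _ (t * y.1 * y'.2) (s * x'.1 * x.2) _ e1 e2); rewrite /=; aring.
move=> hz; exists x, y; split; first exact: frac_refl.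
by split; first exact: frac_refl.
Qed.
Lemma frac_opp x : ~ P x.2 -> lopp P (frac P x) = frac P (- x.1, x.2).
Proof.
move=> hx; apply: pred_ext => z; split.
  move=> [x' [[hx' [s [hs e1]]] hz]].
  apply: frac_trans hz; split => //.
  exists s; split => //.
  apply: (@lc1 _ _ (-1) _ e1); rewrite /=; aring.
move=> hz; exists x; split => //; exact: frac_refl.
Qed.
Lemma frac_der i x : ~ P x.2 ->
  lder d i P (frac P x) = frac P (d i x.1 * x.2 - x.1 * d i x.2, x.2 * x.2).
Proof.
move=> hx; apply: pred_ext => z; split.
  move=> [x' [[hx' [s [hs e1]]] hz]].
  apply: frac_trans hz; split; first by apply: nprM.
  exists (s * s); split; first by apply: nprM.
  have := congr1 (d i) e1; rewrite d0 dM dD dN !dM => e3.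
  apply: (@lc2 _ _ _ (x.2 * x'.2 * s)
     (- (x.2 * x'.2 * d i s) - (x'.2 * d i x.2 + x.2 * d i x'.2) * s) _ e3 e1); rewrite /=; aring.
move=> hz; exists x; split => //; exact: frac_refl.
Qed.
End Prime.

Local Notation pv q := (proj1_sig q).
Lemma pv_prime (q : Xpt d) : prime_ideal (pv q). Proof. exact: (proj2_sig q).1. Qed.
Lemma pv_der (q : Xpt d) i x : pv q x -> pv q (d i x). Proof. exact: (proj2_sig q).2. Qed.
Lemma pv1 (q : Xpt d) : ~ pv q 1. Proof. exact: npr1 (pv_prime q). Qed.

Lemma sec_val (f : sect d) : Osec f -> forall q, exists y, ~ pv q y.2 /\ f q = frac (pv q) y.
Proof.
move=> hf q; have [W [_ [Wq [a [b H]]]]] := hf q.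
have [hb hs] := H q Wq; exists (a, b); split => //; exact: pred_ext.
Qed.

Ltac nprt := rewrite /=; repeat (first [exact: pv1 | assumption | apply: (nprM (pv_prime _)) | apply: (nprX (pv_prime _))]).

Lemma sadd_val (f g : sect d) q x y : ~ pv q x.2 -> ~ pv q y.2 ->
  f q = frac (pv q) x -> g q = frac (pv q) y ->
  sadd f g q = frac (pv q) (x.1 * y.2 + y.1 * x.2, x.2 * y.2).
Proof. move=> hx hy ef eg; rewrite /sadd ef eg frac_add //; exact: pv_prime. Qed.
Lemma smul_val (f g : sect d) q x y : ~ pv q x.2 -> ~ pv q y.2 ->
  f q = frac (pv q) x -> g q = frac (pv q) y ->
  smul f g q = frac (pv q) (x.1 * y.1, x.2 * y.2).
Proof. move=> hx hy ef eg; rewrite /smul ef eg frac_mul //; exact: pv_prime. Qed.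
Lemma sopp_val (f : sect d) q x : ~ pv q x.2 ->
  f q = frac (pv q) x -> sopp f q = frac (pv q) (- x.1, x.2).
Proof. move=> hx ef; rewrite /sopp ef frac_opp //; exact: pv_prime. Qed.
Lemma sder_val (f : sect d) i q x : ~ pv q x.2 ->
  f q = frac (pv q) x -> sder i f q = frac (pv q) (d i x.1 * x.2 - x.1 * d i x.2, x.2 * x.2).
Proof. move=> hx ef; rewrite /sder ef frac_der //; exact: pv_prime. Qed.

Lemma sect_ext (f g : sect d) : (forall q, f q = g q) -> f = g.
Proof. move=> h; exact: functional_extensionality. Qed.

Lemma fr_eqr (q : Xpt d) x y : ~ pv q x.2 -> ~ pv q y.2 -> x.1 * y.2 = y.1 * x.2 ->
  frac (pv q) x = frac (pv q) y.
Proof. apply: frac_eqr; exact: pv_prime. Qed.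

Lemma iota_add x y : iotaO (d:=d) (x + y) = sadd (iotaO x) (iotaO y).
Proof.
apply: sect_ext => q; rewrite (@sadd_val _ _ q (x, 1) (y, 1)); try exact: pv1; try done.
apply: fr_eqr; [nprt|nprt|rewrite /=; aring].
Qed.
Lemma iota_mul x y : iotaO (d:=d) (x * y) = smul (iotaO x) (iotaO y).
Proof.
apply: sect_ext => q; rewrite (@smul_val _ _ q (x, 1) (y, 1)); try exact: pv1; try done.
apply: fr_eqr; [nprt|nprt|rewrite /=; aring].
Qed.
Lemma iota_der i x : iotaO (d:=d) (d i x) = sder i (iotaO x).
Proof.
apply: sect_ext => q; rewrite (@sder_val _ i q (x, 1)); try exact: pv1; try done.
apply: fr_eqr; [nprt|nprt|rewrite /= d1; aring].
Qed.

Fixpoint spow (h : sect d) (n : nat) : sect d :=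
  match n with 0 => s1 (d:=d) | S n => smul h (spow h n) end.
Lemma spow_val (h : sect d) q x n : ~ pv q x.2 -> h q = frac (pv q) x ->
  spow h n q = frac (pv q) (x.1 ^+ n, x.2 ^+ n).
Proof.
move=> hx eh; elim: n => [|n IH] /=; first by rewrite !expr0.
rewrite (@smul_val _ _ q x (x.1 ^+ n, x.2 ^+ n)) //=; last by nprt.
by rewrite !exprS.
Qed.

Definition Zf (f : sect d) (q : Xpt d) := exists z, f q z /\ pv q z.1.
Lemma Z_frac (f : sect d) q x : ~ pv q x.2 -> f q = frac (pv q) x -> (Zf f q <-> pv q x.1).
Proof.
move=> hx ef; rewrite /Zf ef; split.
  move=> [z [[hz [s [hs e]]] hz1]].
  have : pv q (s * (x.1 * z.2)).
    have -> : s * (x.1 * z.2) = s * (x.1 * z.2 - z.1 * x.2) + s * (z.1 * x.2) by aring.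
    rewrite e add0r. apply: (prM (pv_prime q)); exact: (prMr (pv_prime q)) hz1.
  by case/(prP (pv_prime q)) => // /(prP (pv_prime q)) [].
move=> h; exists x; split => //; apply: frac_refl => //; exact: pv_prime.
Qed.

Section Ideal.
Variable I : A -> Prop.
Hypothesis hI : ideal I.
Lemma id0 : I 0. Proof. exact: hI.1. Qed.
Lemma idD x y : I x -> I y -> I (x + y). Proof. exact: hI.2.1. Qed.
Lemma idM x y : I y -> I (x * y). Proof. exact: hI.2.2. Qed.
Lemma idMr x y : I x -> I (x * y). Proof. by move=> h; rewrite mulrC; apply: idM. Qed.
Lemma idN x : I x -> I (- x). Proof. by move=> h; rewrite -mulN1r; apply: idM. Qed.
Lemma idX x n : I x -> I (x ^+ n.+1). Proof. by move=> h; rewrite exprSr; apply: idM. Qed.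
End Ideal.

Definition radc (M : A -> Prop) := forall x n, M (x ^+ n) -> M x.

Lemma colon_di (M : A -> Prop) a : diff_ideal d M -> radc M -> diff_ideal d (fun y => M (a * y)).
Proof.
move=> [hM hdM] hr; split; first split.
- by rewrite mulr0; exact: id0.
- split; first by move=> x y h1 h2; rewrite mulrDr; apply: idD.
  by move=> x y h; rewrite mulrCA; apply: idM.
- move=> i y h.
  have h1 : M (d i (a * y)) by apply: hdM.
  rewrite dM in h1.
  apply: (hr _ 2); rewrite expr2.
  have -> : a * d i y * (a * d i y) = (a * d i y) * (d i a * y + a * d i y) - (d i a * d i y) * (a * y) by aring.
  by apply: (idD hM); [apply: (idM hM) | apply: (idN hM); apply: (idM hM)].
Qed.

Lemma colon_rad (M : A -> Prop) a : ideal M -> radc M -> radc (fun y => M (a * y)).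
Proof.
move=> hM hr x [|n] h.
  by rewrite expr0 mulr1 in h; apply: (idMr hM).
apply: (hr _ n.+1); rewrite exprMn exprS -mulrA mulrCA.
exact: (idM hM).
Qed.

Lemma KZ (I : A -> Prop) (c : A) : diff_ideal d I -> (forall n, ~ I (c ^+ n)) ->
  exists P, dspec d P /\ incl I P /\ ~ P c.
Proof.
move=> hI hc.
pose F := fun J => diff_ideal d J /\ incl I J /\ forall n, ~ J (c ^+ n).
have [M [[hM [hIM hcM]] Mmax]] : exists M, F M /\ forall J, F J -> incl M J -> incl J M.
  apply: (zorn (b := I)).
  - by split => //; split => // x.
  - by move=> J [_ [h _]].
  move=> C HC hch.
  have hCI J x : C J -> I x -> J x by move=> CJ; have [_ [h _]] := HC J CJ; apply: h.
  have hCd J : C J -> diff_ideal d J by move=> CJ; have [h _] := HC J CJ.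
  split; last split.
  - split; first split.
    + left; exact: hI.1.1.
    + split.
      * move=> x y [hx|[J1 [C1 h1]]] [hy|[J2 [C2 h2]]].
        -- left; exact: hI.1.2.1.
        -- right; exists J2; split => //; apply: (idD (hCd _ C2).1) => //; exact: hCI.
        -- right; exists J1; split => //; apply: (idD (hCd _ C1).1) => //; exact: hCI.
        -- case: (hch _ _ C1 C2) => hJ.
           ++ right; exists J2; split => //; apply: (idD (hCd _ C2).1) => //; exact: hJ.
           ++ right; exists J1; split => //; apply: (idD (hCd _ C1).1) => //; exact: hJ.
      * move=> x y [hy|[J [CJ h]]]; first by left; exact: hI.1.2.2.
        by right; exists J; split => //; apply: (idM (hCd _ CJ).1).
    + move=> i x [hx|[J [CJ h]]]; first by left; exact: hI.2.
      by right; exists J; split => //; apply: (hCd _ CJ).2.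
  - by move=> x h; left.
  - move=> n [h|[J [CJ h]]]; first exact: hc h.
    by have [_ [_ h']] := HC J CJ; apply: h' h.
have hrM : radc M.
  move=> x n hx.
  have hF : F (radical M).
    split; first exact: HK.
    split; first by move=> y h; exists 1%N; rewrite expr1; apply: hIM.
    by move=> k [j hj]; apply: (hcM (k * j)%N); rewrite exprM.
  apply: (Mmax _ hF); last by exists n.
  by move=> y h; exists 1%N; rewrite expr1.
have Fcol a : (forall n, ~ M (a * c ^+ n)) -> F (fun y => M (a * y)).
  move=> h; split; first exact: colon_di.
  split; last exact: h.
  by move=> y hy; apply: (idM hM.1); apply: hIM.
exists M; split; last split => //.
- split; last exact: hM.2.
  split; first exact: hM.1.
  split; first by move=> h; apply: (hcM 0%N); rewrite expr0.
  move=> x y hxy; apply: NNPP => hn.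
  have hx : ~ M x by move=> h; apply: hn; left.
  have hy : ~ M y by move=> h; apply: hn; right.
  have [n hn'] : exists n, M (x * c ^+ n).
    apply: NNPP => h1.
    have hF : F (fun z => M (x * z)) by apply: Fcol => n h2; apply: h1; exists n.
    apply: hy; apply: (Mmax _ hF) => //.
    by move=> z hz; apply: (idM hM.1).
  have hF : F (fun z => M (c ^+ n * z)).
    split; first exact: colon_di.
    split; first by move=> z hz; apply: (idM hM.1); exact: hIM.
    by move=> k; rewrite -exprD; apply: hcM.
  apply: hx; apply: (Mmax _ hF); first by move=> z hz; apply: (idM hM.1).
  by rewrite mulrC.
- move=> h; apply: (hcM 1%N); by rewrite expr1.
Qed.

Lemma zero_di : diff_ideal d (fun y : A => y = 0).
Proof.
split; first split => //.
  split; first by move=> x y -> ->; rewrite addr0.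
  by move=> x y ->; rewrite mulr0.
by move=> i x ->; rewrite d0.
Qed.

Lemma nilloc (x c : A) :
  (forall P, dspec d P -> ~ P c -> exists s, ~ P s /\ s * x = 0) -> exists n, (c * x) ^+ n = 0.
Proof.
move=> H.
pose N := radical (fun y : A => y = 0).
have hN : diff_ideal d N by apply: HK; exact: zero_di.
have rN : radc N by move=> y n [k hk]; exists (n * k)%N; rewrite exprM.
have hR : diff_ideal d (fun y => N (x * y)) by exact: colon_di.
have rR : radc (fun y => N (x * y)) by apply: colon_rad => //; exact: hN.1.
suff [k hk] : N (x * c) by exists k; rewrite mulrC.
apply: NNPP => hn.
have [P [hP [hRP hPc]]] := KZ hR (fun n h => hn (rR _ _ h)).
have [s [hs e]] := H P hP hPc.
apply: hs; apply: hRP; exists 1%N; by rewrite expr1 mulrC.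
Qed.

Inductive gen (S : A -> Prop) : A -> Prop :=
 | gS x : S x -> gen S x
 | g0 : gen S 0
 | gD x y : gen S x -> gen S y -> gen S (x + y)
 | gM x y : gen S y -> gen S (x * y)
 | gd i x : gen S x -> gen S (d i x).

Lemma gen_di S : diff_ideal d (gen S).
Proof.
split; first split; first exact: g0.
  by split; [exact: gD | exact: gM].
exact: gd.
Qed.
Lemma gen_incl S (J : A -> Prop) : diff_ideal d J -> incl S J -> incl (gen S) J.
Proof.
move=> [hJ hdJ] hS x; elim => {x}.
- by move=> x /hS.
- exact: id0.
- by move=> x y _ h1 _ h2; apply: idD.
- by move=> x y _ h; apply: idM.
- by move=> i x _ h; apply: hdJ.
Qed.
Lemma gen_mono S S' : incl S S' -> incl (gen S) (gen S').
Proof. move=> h; apply: gen_incl; first exact: gen_di. by move=> x /h /gS. Qed.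
Lemma gen_fin S x : gen S x ->
  exists l : list A, (forall e, List.In e l -> S e) /\ gen (fun e => List.In e l) x.
Proof.
elim => {x}.
- move=> x hx; exists [:: x]; split; first by move=> e [<-|[]].
  by apply: gS; left.
- by exists [::]; split => //; exact: g0.
- move=> x y _ [l1 [h1 g1]] _ [l2 [h2 g2]]; exists (l1 ++ l2); split.
    by move=> e he; case: (List.in_app_or _ _ _ he) => ?; [apply: h1 | apply: h2].
  apply: gD.
    apply: (@gen_mono (fun e => List.In e l1) _ _ x g1) => e ?; apply: List.in_or_app; by left.
  apply: (@gen_mono (fun e => List.In e l2) _ _ y g2) => e ?; apply: List.in_or_app; by right.
- by move=> x y _ [l [h g]]; exists l; split => //; apply: gM.
- by move=> i x _ [l [h g]]; exists l; split => //; apply: gd.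
Qed.

Lemma QC (S : A -> Prop) : (forall P, dspec d P -> exists e, S e /\ ~ P e) ->
  exists l : list A, (forall e, List.In e l -> S e) /\
    forall P, dspec d P -> exists e, List.In e l /\ ~ P e.
Proof.
move=> H.
have g1 : gen S 1.
  apply: NNPP => hn.
  have h1n : forall n, ~ gen S (1 ^+ n) by move=> n; rewrite expr1n.
  have [P [hP [hSP _]]] := KZ (gen_di S) h1n.
  have [e [he hPe]] := H P hP; apply: hPe; apply: hSP; exact: gS.
have [l [hl gl]] := gen_fin g1.
exists l; split => // P hP; apply: NNPP => hn.
have : incl (gen (fun e => List.In e l)) P.
  apply: gen_incl; first by split; [exact: hP.1.1 | exact: hP.2].
  by move=> e he; apply: NNPP => hPe; apply: hn; exists e.
by move=> /(_ _ gl); apply: (npr1 hP.1).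
Qed.

Definition isv (f : sect d) (q : Xpt d) (x : A * A) := ~ pv q x.2 /\ f q = frac (pv q) x.

Lemma isv_add f g q x y : isv f q x -> isv g q y -> isv (sadd f g) q (x.1 * y.2 + y.1 * x.2, x.2 * y.2).
Proof. move=> [hx ex] [hy ey]; split; first by nprt. exact: sadd_val. Qed.
Lemma isv_mul f g q x y : isv f q x -> isv g q y -> isv (smul f g) q (x.1 * y.1, x.2 * y.2).
Proof. move=> [hx ex] [hy ey]; split; first by nprt. exact: smul_val. Qed.
Lemma isv_opp f q x : isv f q x -> isv (sopp f) q (- x.1, x.2).
Proof. move=> [hx ex]; split => //. exact: sopp_val. Qed.
Lemma isv_der f i q x : isv f q x -> isv (sder i f) q (d i x.1 * x.2 - x.1 * d i x.2, x.2 * x.2).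
Proof. move=> [hx ex]; split; first by nprt. exact: sder_val. Qed.
Lemma isv_iota a q : isv (iotaO a) q (a, 1).
Proof. split => //; exact: pv1. Qed.
Lemma isv_s0 q : isv (s0 (d:=d)) q (0, 1). Proof. exact: isv_iota. Qed.
Lemma isv_s1 q : isv (s1 (d:=d)) q (1, 1). Proof. exact: isv_iota. Qed.
Lemma isv_spow h q x n : isv h q x -> isv (spow h n) q (x.1 ^+ n, x.2 ^+ n).
Proof. move=> [hx ex]; split; first by nprt. exact: spow_val. Qed.
Lemma isv_eq f g q x y : isv f q x -> isv g q y -> x.1 * y.2 = y.1 * x.2 -> f q = g q.
Proof. move=> [hx ->] [hy ->] e; exact: fr_eqr. Qed.
Lemma isv_eqw f g q x y : isv f q x -> isv g q y ->
  (exists s, ~ pv q s /\ s * (x.1 * y.2 - y.1 * x.2) = 0) -> f q = g q.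
Proof. move=> [hx ->] [hy ->] [s [hs e]]; apply: frac_eq; [exact: pv_prime | done | by split => //; exists s]. Qed.
Lemma isv_sec f : Osec f -> forall q, exists x, isv f q x.
Proof. move=> hf q; have [x [h1 h2]] := sec_val hf q; by exists x. Qed.
Lemma Z_isv f q x : isv f q x -> (Zf f q <-> pv q x.1).
Proof. move=> [hx ex]; exact: Z_frac. Qed.

Lemma pt_eq (p q : Xpt d) : pv p = pv q -> p = q.
Proof.
case: p => P hP; case: q => Q hQ /= e; subst Q; f_equal; exact: proof_irrelevance.
Qed.

Lemma open_pt (W : Xpt d -> Prop) (p : Xpt d) : openX W -> W p ->
  exists e, ~ pv p e /\ forall q, ~ pv q e -> W q.
Proof.
move=> [E hE] Wp; have := (hE p).1 Wp => hn.
have [e he] : exists e, ~ (E e -> pv p e) by apply: NNPP => h; apply: hn => x hx; apply: NNPP => h'; apply: h; exists x => h2; apply: h'; apply: h2.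
exists e; split; first by move=> h; apply: he => _.
move=> q hq; apply/(hE q) => h; apply: hq; apply: h; apply: NNPP => h'; apply: he => h2; exfalso; exact: h'.
Qed.

Variable D : sect d -> Prop.
Hypothesis HD : dsubring D.
Hypothesis HiD : forall a, D (iotaO (d:=d) a).

Lemma DO f : D f -> Osec f. Proof. exact: HD.1. Qed.
Lemma Ds0 : D (s0 (d:=d)). Proof. exact: HD.2.1. Qed.
Lemma Ds1 : D (s1 (d:=d)). Proof. exact: HD.2.2.1. Qed.
Lemma Dadd f g : D f -> D g -> D (sadd f g). Proof. exact: HD.2.2.2.1. Qed.
Lemma Dopp f : D f -> D (sopp f). Proof. exact: HD.2.2.2.2.1. Qed.
Lemma Dmul f g : D f -> D g -> D (smul f g). Proof. exact: HD.2.2.2.2.2.1. Qed.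
Lemma Dder i f : D f -> D (sder i f). Proof. exact: HD.2.2.2.2.2.2. Qed.
Lemma Dspow h n : D h -> D (spow h n).
Proof. move=> hh; elim: n => [|n IH] /=; [exact: Ds1 | exact: Dmul]. Qed.

Section SpecD.
Variable Q : sect d -> Prop.
Hypothesis hQ : dspecD D Q.
Lemma QD f : Q f -> D f. Proof. exact: hQ.1. Qed.
Lemma Qs0 : Q (s0 (d:=d)). Proof. exact: hQ.2.1. Qed.
Lemma Qadd f g : Q f -> Q g -> Q (sadd f g). Proof. exact: hQ.2.2.1. Qed.
Lemma Qmul f g : D f -> Q g -> Q (smul f g). Proof. exact: hQ.2.2.2.1. Qed.
Lemma Qn1 : ~ Q (s1 (d:=d)). Proof. exact: hQ.2.2.2.2.1. Qed.
Lemma Qprime f g : D f -> D g -> Q (smul f g) -> Q f \/ Q g. Proof. exact: hQ.2.2.2.2.2.1. Qed.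
Lemma Qder i f : Q f -> Q (sder i f). Proof. exact: hQ.2.2.2.2.2.2. Qed.
Lemma Qopp f : Q f -> Q (sopp f).
Proof.
move=> hf; have Df := QD hf.
have -> : sopp f = smul (sopp (s1 (d:=d))) f.
  apply: sect_ext => q; have [x hx] := isv_sec (DO Df) q.
  apply: (isv_eq (isv_opp hx) (isv_mul (isv_opp (isv_s1 q)) hx)) => /=; aring.
apply: Qmul hf; apply: Dopp; exact: Ds1.
Qed.
Lemma Qspow h n : D h -> Q (spow h n) -> Q h.
Proof.
move=> hh; elim: n => [|n IH] /=; first by move/Qn1.
by case/(Qprime hh (Dspow n hh)).
Qed.

Lemma istar_dspec : dspec d (iota_star Q).
Proof.
rewrite /iota_star; split; last by move=> i x h; rewrite iota_der; exact: Qder.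
split; first split; first exact: Qs0.
- split; first by move=> x y h1 h2; rewrite iota_add; exact: Qadd.
  by move=> x y h; rewrite iota_mul; apply: Qmul.
split; first exact: Qn1.
by move=> x y; rewrite iota_mul; apply: Qprime.
Qed.

Variable pt : Xpt d.
Hypothesis Hpt : forall a, pv pt a <-> Q (iotaO a).

Lemma spow_mono h q n k : D h -> spow h n q = s0 q -> spow h (n + k)%N q = s0 q.
Proof.
move=> hh e; elim: k => [|k IH]; first by rewrite addn0.
rewrite addnS /=; have [x hx] := isv_sec (DO hh) q.
have hz : isv (spow h (n + k)) q (0, 1) by split; [exact: pv1 | rewrite IH].
apply: (isv_eq (isv_mul hx hz) (isv_s0 q)) => /=; aring.
Qed.

Lemma Lvan (g : sect d) (e : A) : D g -> ~ pv pt e ->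
  (forall q, ~ pv q e -> g q = frac (pv q) (0, 1)) -> Q g.
Proof.
move=> Dg he Hg.
pose h := smul (iotaO e) g.
have Dh : D h by apply: Dmul.
pose S := fun c => exists a b, forall q : Xpt d, ~ pv q c -> isv g q (a, b).
have cov : forall P, dspec d P -> exists c, S c /\ ~ P c.
  move=> P hP; pose q := exist _ P hP : Xpt d.
  have [W [oW [Wq [a [b H]]]]] := DO Dg q.
  have [c [hc hcW]] := open_pt oW Wq.
  exists c; split => //; exists a, b => q' hq'.
  have [h1 h2] := H q' (hcW q' hq'); split => //; exact: pred_ext.
have [l [hl hlc]] := QC cov.
have hexp : forall c, S c -> exists n, forall q, ~ pv q c -> spow h n q = s0 q.
  move=> c [a [b Hab]].
  have [n hn] : exists n, (c * e * a) ^+ n = 0.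
    apply: nilloc => P hP hPce.
    pose q := exist _ P hP : Xpt d.
    have hqc : ~ pv q c by move=> h1; apply: hPce; apply: (prMr hP.1).
    have hqe : ~ pv q e by move=> h1; apply: hPce; apply: (prM hP.1).
    have [_ e1] := Hab q hqc.
    have : frac (pv q) (0, 1) (0, 1) by apply: (frac_refl (pv_prime q)); exact: pv1.
    rewrite -Hg // e1 => -[_ [s [hs es]]]; exists s; split => //.
    by move: es; rewrite /= mulr1 mul0r subr0.
  exists n => q hq.
  have hv := isv_spow n (isv_mul (isv_iota e q) (Hab q hq)).
  apply: (isv_eqw hv (isv_s0 q)); exists (c ^+ n); split; first by apply: (nprX (pv_prime q))...
  by rewrite /= mulr1 mul0r subr0 -exprMn mulrA.
have [N hN] : exists N, forall c, List.In c l -> forall q, ~ pv q c -> spow h N q = s0 q.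
  elim: l hl {hlc} => [|c l IH] hl; first by exists 0%N => c [].
  have [N1 h1] := IH (fun e' he' => hl e' (or_intror he')).
  have [n hn] := hexp c (hl c (or_introl erefl)).
  exists (n + N1)%N => c' [<-|hc'] q hq.
    exact: (@spow_mono h q n N1 Dh (hn q hq)).
  by rewrite addnC; apply: (@spow_mono h q N1 n Dh); apply: (h1 c' hc' q hq).
have : spow h N = s0 (d:=d) by apply: sect_ext => q; have [c [hc hqc]] := hlc _ (proj2_sig q); exact: hN hc q hqc.
move=> eN; have : Q (spow h N) by rewrite eN; exact: Qs0.
move/(Qspow Dh); case/(Qprime (HiD e) Dg) => //.
by move/Hpt.
Qed.

Lemma CH f : D f -> (Q f <-> Zf f pt).
Proof.
move=> Df.
have [W [oW [Wpt [a [b H]]]]] := DO Df pt.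
have [e [he heW]] := open_pt oW Wpt.
have Hq : forall q, W q -> isv f q (a, b).
  by move=> q Wq; have [h1 h2] := H q Wq; split => //; exact: pred_ext.
pose g := sadd (smul (iotaO b) f) (sopp (iotaO a)).
have Dg : D g by apply: Dadd; [apply: Dmul | apply: Dopp].
have Qg : Q g.
  apply: (Lvan Dg he) => q hq.
  have hv := isv_add (isv_mul (isv_iota b q) (Hq q (heW q hq))) (isv_opp (isv_iota a q)).
  have h0 := isv_s0 q.
  apply: (isv_eq hv h0); rewrite /=; aring.
have Hgv : forall q y, isv f q y -> isv g q (b * y.1 * 1 + - a * (1 * y.2), 1 * y.2 * 1).
  by move=> q y hy; exact: (isv_add (isv_mul (isv_iota b q) hy) (isv_opp (isv_iota a q))).
have I1 : iotaO a = sadd (smul (iotaO b) f) (sopp g).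
  apply: sect_ext => q; have [y hy] := isv_sec (DO Df) q.
  apply: (isv_eq (isv_iota a q) (isv_add (isv_mul (isv_iota b q) hy) (isv_opp (Hgv q y hy)))).
  rewrite /=; aring.
have I2 : smul (iotaO b) f = sadd g (iotaO a).
  apply: sect_ext => q; have [y hy] := isv_sec (DO Df) q.
  apply: (isv_eq (isv_mul (isv_iota b q) hy) (isv_add (Hgv q y hy) (isv_iota a q))).
  rewrite /=; aring.
have Zeq := Z_isv (Hq pt Wpt); rewrite Zeq /=.
split.
  move=> Qf; apply/Hpt; rewrite I1; apply: Qadd; first exact: Qmul.
  exact: Qopp.
move=> /Hpt Qa.
have : Q (smul (iotaO b) f) by rewrite I2; exact: Qadd.
case/(Qprime (HiD b) Df) => // /Hpt hb.
by have [hb' _] := Hq pt Wpt.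
Qed.
End SpecD.

Definition QPdef (p : Xpt d) := fun f => D f /\ Zf f p.

Lemma QP_spec p : dspecD D (QPdef p) /\ forall a, (QPdef p (iotaO a) <-> pv p a).
Proof.
have hp := pv_prime p.
have Zv : forall f, D f -> exists x, isv f p x /\ (Zf f p <-> pv p x.1).
  by move=> f Df; have [x hx] := isv_sec (DO Df) p; exists x; split => //; exact: Z_isv.
split; last first.
  move=> a; rewrite /QPdef (Z_isv (isv_iota a p)) /=; split; first by case.
  by move=> h; split => //; exact: HiD.
split; first by move=> f [].
split; first by split; [exact: Ds0 | apply/(Z_isv (isv_s0 p)); exact: (pr0 hp)].
split.
  move=> f g [Df Zf'] [Dg Zg]; split; first exact: Dadd.
  have [x [hx ex]] := Zv f Df; have [y [hy ey]] := Zv g Dg.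
  apply/(Z_isv (isv_add hx hy)) => /=; apply: (prD hp); apply: (prMr hp).
    by apply/ex.
  by apply/ey.
split.
  move=> f g Df [Dg Zg]; split; first exact: Dmul.
  have [x [hx ex]] := Zv f Df; have [y [hy ey]] := Zv g Dg.
  by apply/(Z_isv (isv_mul hx hy)) => /=; apply: (prM hp); apply/ey.
split.
  move=> [_ Z1]; move: Z1; rewrite (Z_isv (isv_s1 p)) /=; exact: pv1.
split.
  move=> f g Df Dg [_ Zfg].
  have [x [hx ex]] := Zv f Df; have [y [hy ey]] := Zv g Dg.
  move: Zfg; rewrite (Z_isv (isv_mul hx hy)) /= => /(prP hp) [h|h].
    by left; split => //; apply/ex.
  by right; split => //; apply/ey.
move=> i f [Df Zf'].
split; first exact: Dder.
have [x [hx ex]] := Zv f Df.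
have x1 : pv p x.1 by apply/ex.
apply/(Z_isv (isv_der i hx)) => /=; apply: (prB hp).
  by apply: (prMr hp); apply: pv_der.
by apply: (prMr hp).
Qed.

Lemma Zopen f (p : Xpt d) : D f -> ~ Zf f p ->
  exists c, ~ pv p c /\ forall q, ~ pv q c -> ~ Zf f q.
Proof.
move=> Df hZ.
have [W [oW [Wp [a [b H]]]]] := DO Df p.
have [e [he heW]] := open_pt oW Wp.
have Hq : forall q, W q -> isv f q (a, b).
  by move=> q Wq; have [h1 h2] := H q Wq; split => //; exact: pred_ext.
have ha : ~ pv p a by move=> h; apply: hZ; apply/(Z_isv (Hq p Wp)).
exists (e * a); split; first by apply: (nprM (pv_prime p)).
move=> q hq; rewrite (Z_isv (Hq q (heW q _))) /=.
  by move=> h; apply: hq; apply: (prM (pv_prime q)).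
by move=> h; apply: hq; apply: (prMr (pv_prime q)).
Qed.

Lemma main_homeo : homeo (dspecD D) (kclosed (dspecD D)) (dspec d) (kclosed (dspec d))
    (iota_star (d:=d)).
Proof.
split; first by move=> Q hQ; exact: istar_dspec.
split.
  move=> x y hx hy heq f.
  pose px := exist _ (iota_star x) (istar_dspec hx) : Xpt d.
  pose py := exist _ (iota_star y) (istar_dspec hy) : Xpt d.
  have epq : px = py by apply: pt_eq; apply: pred_ext.
  have Hx := @CH x hx px (fun a => iff_refl _).
  have Hy := @CH y hy py (fun a => iff_refl _).
  split => h.
    have Df := QD hx h; apply/(Hy _ Df); rewrite -epq; exact/(Hx _ Df).
  have Df := QD hy h; apply/(Hx _ Df); rewrite epq; exact/(Hy _ Df).
split.
  move=> P hP; pose p := exist _ P hP : Xpt d; exists (QPdef p); split; first exact: (QP_spec p).1.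
  move=> a; exact: (QP_spec p).2 a.
split.
  move=> C [E hE]; exists (fun f => exists a, E a /\ f = iotaO a) => Q hQ.
  rewrite (hE _ (istar_dspec hQ)); split.
    by move=> h f [a [ha ->]]; apply: h.
  by move=> h a ha; apply: h; exists a.
move=> C [E' hE'].
exists (fun c => exists f, E' f /\ (D f -> forall q : Xpt d, ~ pv q c -> ~ Zf f q)).
move=> P hP; pose p := exist _ P hP : Xpt d; split.
  move=> [Q [hQ [CQ heq]]] c [f [hf hfc]].
  have Qf := (hE' Q hQ).1 CQ f hf.
  have Df := QD hQ Qf.
  pose pq := exist _ (iota_star Q) (istar_dspec hQ) : Xpt d.
  have Zq : Zf f pq by apply/(@CH Q hQ pq (fun a => iff_refl _) f Df).
  apply: NNPP => hPc; apply: (hfc Df pq) => //.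
  by move=> /(heq c).
move=> H; exists (QPdef p); split; first exact: (QP_spec p).1.
split; last by move=> a; exact: (QP_spec p).2 a.
apply/(hE' _ (QP_spec p).1) => f hf.
have Df : D f.
  apply: NNPP => nD; apply: (npr1 hP.1); apply: H; exists f; split => // Df; contradiction.
split => //; apply: NNPP => nZ.
have [c [hc hcq]] := Zopen Df nZ.
by apply: hc; apply: H; exists f; split => // _.
Qed.
End Main.

Theorem theorem3p2 (A : comPzRingType) (m : nat) (d : 'I_m -> A -> A)
  (Hd : diff_structure d) (HK : keigher d)
  (D : sect d -> Prop) (HD : dsubring D) (HiD : forall a, D (iotaO (d:=d) a)) :
  homeo (dspecD D) (kclosed (dspecD D)) (dspec d) (kclosed (dspec d))
    (iota_star (d:=d)).
Proof. exact: main_homeo. Qed.
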